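(* Suppose that $\gamma_*>0$ and $P[\mu_1,\mu_2]$ is a nonsingular matrix. Then the two $n\times 2$ matrices $U(\gamma_* )=[u_1(\gamma_* )\ u_2(\gamma_* )]$ and $V(\gamma_* )=[v_1(\gamma_* )\ v_2(\gamma_* )]$ are full rank.
   Context: Let $P(\lambda)=\sum_{j=0}^m A_j\lambda^j$ be an $n\times n$ matrix polynomial with $\det A_m\neq0$, let $\mu_1\neq\mu_2$ be complex numbers, $P[\mu_1,\mu_2]=\frac{P(\mu_1)-P(\mu_2)}{\mu_1-\mu_2}$, and $F[P(\mu_1,\mu_2);\gamma]=\begin{bmatrix} P(\mu_1) & 0\\ \gamma P[\mu_1,\mu_2] & P(\mu_2)\end{bmatrix}$. Let $\gamma_*$ be a point where $s_{2n-1}(F[P(\mu_1,\mu_2);\gamma])$ attains its maximum $s_*>0$ over $\gamma\ge0$. Let $\begin{bmatrix} u_1(\gamma_* )\\ u_2(\gamma_* )\end{bmatrix},\begin{bmatrix} v_1(\gamma_* )\\ v_2(\gamma_* )\end{bmatrix}$ ($u_k,v_k\in\mathbb{C}^n$) be a pair of left and right singular vectors of $s_*$ chosen such that $u_2(\gamma_* )^*P[\mu_1,\mu_2]v_1(\gamma_* )=0$, $u_2(\gamma_* )^*u_1(\gamma_* )=v_2(\gamma_* )^*v_1(\gamma_* )$, and $U(\gamma_* )^*U(\gamma_* )=V(\gamma_* )^*V(\gamma_* )$ (such a pair exists). *)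

(* Defs.v *)
From HB Require Import structures.
From mathcomp Require Import all_boot all_order all_algebra.
From mathcomp Require Import reals.
From mathcomp Require Import complex.
Set Implicit Arguments. Unset Strict Implicit. Unset Printing Implicit Defensive.
Import Order.TTheory GRing.Theory Num.Theory.
Local Open Scope ring_scope.
Local Open Scope complex_scope.

Section Defs.
Variable R : realType.
Local Notation C := R[i].

Definition ctr (p q : nat) (M : 'M[C]_(p, q)) : 'M[C]_(q, p) :=
  map_mx (@conjc _) M^T.

Definition unitary (N : nat) (X : 'M[C]_N) : Prop := ctr X *m X = 1%:M.

(* is_sv A k s : s is the (k+1)-th largest singular value of A (0-based index k),
   i.e. s = d k in some singular value decomposition A = X diag(d) Y^* with
   X, Y unitary and d nonnegative and nonincreasing. *)
Definition is_sv (N : nat) (A : 'M[C]_N) (k : nat) (s : R) : Prop :=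
  (k < N)%N /\
  exists (X Y : 'M[C]_N) (d : nat -> R),
    [/\ unitary X /\ unitary Y,
        (forall j, (j < N)%N -> 0 <= d j),
        (forall j l, (j <= l < N)%N -> d l <= d j),
        A = X *m diag_mx (\row_(j < N) (d j)%:C) *m ctr Y
      & s = d k].

Definition mpoly_eval (n m : nat) (A : nat -> 'M[C]_n) (lam : C) : 'M[C]_n :=
  \sum_(j < m.+1) (lam ^+ j) *: A j.

Definition mpoly_dd (n m : nat) (A : nat -> 'M[C]_n) (mu1 mu2 : C) : 'M[C]_n :=
  (mu1 - mu2)^-1 *: (mpoly_eval m A mu1 - mpoly_eval m A mu2).

Definition Fmat (n m : nat) (A : nat -> 'M[C]_n) (mu1 mu2 : C) (g : R)
  : 'M[C]_(n + n) :=
  block_mx (mpoly_eval m A mu1) 0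
           (g%:C *: mpoly_dd m A mu1 mu2) (mpoly_eval m A mu2).

End Defs.

(* Main.v *)
Require Import Defs.
From HB Require Import structures.
From mathcomp Require Import all_boot all_order all_algebra.
From mathcomp Require Import reals.
From mathcomp Require Import complex.
From mathcomp Require Import ring.
Import Order.TTheory GRing.Theory Num.Theory.
Local Open Scope ring_scope.
Local Open Scope complex_scope.
Set Implicit Arguments. Unset Strict Implicit.

Section H.
Variable R : realType.
Local Notation C := R[i].

Lemma ctrM p q r (A : 'M[C]_(p, q)) (B : 'M[C]_(q, r)) :
  ctr (A *m B) = ctr B *m ctr A.
Proof. by rewrite /ctr trmx_mul map_mxM. Qed.

Lemma ctrZ p q a (A : 'M[C]_(p, q)) : ctr (a *: A) = conjc a *: ctr A.
Proof. by rewrite /ctr linearZ /= map_mxZ. Qed.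

Lemma ctrB p q (A B : 'M[C]_(p, q)) : ctr (A - B) = ctr A - ctr B.
Proof. by rewrite /ctr linearB /= map_mxB. Qed.

Lemma ctr0 p q : ctr (0 : 'M[C]_(p, q)) = 0.
Proof. by apply/matrixP=> i j; rewrite /ctr !mxE conjc0. Qed.

Lemma ctr_col p1 p2 q (A : 'M[C]_(p1, q)) (B : 'M[C]_(p2, q)) :
  ctr (col_mx A B) = row_mx (ctr A) (ctr B).
Proof. by rewrite /ctr tr_col_mx map_row_mx. Qed.

Lemma ctr_row p q1 q2 (A : 'M[C]_(p, q1)) (B : 'M[C]_(p, q2)) :
  ctr (row_mx A B) = col_mx (ctr A) (ctr B).
Proof. by rewrite /ctr tr_row_mx map_col_mx. Qed.

Lemma ctr_block p1 p2 q1 q2 (A : 'M[C]_(p1, q1)) (B : 'M[C]_(p1, q2))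
  (D : 'M[C]_(p2, q1)) (E : 'M[C]_(p2, q2)) :
  ctr (block_mx A B D E) = block_mx (ctr A) (ctr D) (ctr B) (ctr E).
Proof. by rewrite /ctr tr_block_mx map_block_mx. Qed.

Lemma ctr_eq0 p (x : 'cV[C]_p) : ctr x *m x = 0 -> x = 0.
Proof.
move=> /matrixP /(_ 0 0); rewrite !mxE => H.
have H' : \sum_(i < p) `|x i 0| ^+ 2 = 0.
  rewrite -[RHS]H; apply: eq_bigr => i _; rewrite !mxE sqr_normc mulrC //.
apply/matrixP => i j; rewrite (ord1 j) mxE.
have := @psumr_eq0P _ _ xpredT _ (fun i _ => exprn_ge0 2 (normr_ge0 (x i 0))) H' i isT.
by move/eqP; rewrite sqrf_eq0 normr_eq0 => /eqP.
Qed.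

Lemma unit_ctr p (D : 'M[C]_p) : \det D != 0 -> ctr D \in unitmx.
Proof.
by move=> H; rewrite unitmxE unitfE /ctr det_map_mx det_tr conjc_eq0.
Qed.

Lemma inj_unit p (D : 'M[C]_p) (x : 'cV[C]_p) : D \in unitmx -> D *m x = 0 -> x = 0.
Proof. by move=> U H; rewrite -(mulKmx U x) H mulmx0. Qed.


Lemma core n (P1 P2 D : 'M[C]_n) (d : C) (g s : R) (u1 u2 v1 v2 : 'cV[C]_n) (a b : C) :
  d != 0 -> P1 - P2 = d *: D -> \det D != 0 -> 0 < g ->
  P1 *m v1 = s%:C *: u1 ->
  (g%:C *: D) *m v1 + P2 *m v2 = s%:C *: u2 ->
  ctr P1 *m u1 + ctr (g%:C *: D) *m u2 = s%:C *: v1 ->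
  ctr P2 *m u2 = s%:C *: v2 ->
  ctr u1 *m u1 = ctr v1 *m v1 ->
  ctr u2 *m u2 = ctr v2 *m v2 ->
  ctr u1 *m u1 + ctr u2 *m u2 = 1%:M ->
  a *: u1 + b *: u2 = 0 -> a *: v1 + b *: v2 = 0 -> a = 0 /\ b = 0.
Proof.
move=> d0 PD Dn g0 E1 E2 E3 E4 G1 G2 N H1 H2.
have gC0 : g%:C != 0 by rewrite eq_complex /= eqxx andbT gt_eqF.
have Du : D \in unitmx by rewrite unitmxE unitfE.
have cDu := unit_ctr Dn.
have one0 : (1%:M : 'M[C]_1) != 0.
  by apply/eqP => /matrixP /(_ 0 0); rewrite !mxE /= => /eqP; rewrite oner_eq0.
have v10 : v1 != 0.
  apply/eqP => v1E; move: G1; rewrite v1E mulmx0 => /ctr_eq0 u1E.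
  move: E3; rewrite u1E v1E mulmx0 scaler0 add0r ctrZ -scalemxAl => /eqP.
  rewrite scaler_eq0 conjc_eq0 (negPf gC0) /=.
  move/eqP/(inj_unit cDu) => u2E; move: N; rewrite u1E u2E !mulmx0 addr0 => N.
  by rewrite -N eqxx in one0.
have u20 : u2 != 0.
  apply/eqP => u2E; move: G2 E2; rewrite u2E mulmx0 => /esym/ctr_eq0 ->.
  rewrite mulmx0 scaler0 addr0 -scalemxAl => /eqP; rewrite scaler_eq0 (negPf gC0) /=.
  by move/eqP/(inj_unit Du) => v1E; rewrite v1E eqxx in v10.
have bv2 : b *: v2 = - (a *: v1) by apply/eqP; rewrite -addr_eq0 addrC H2.
have bu2 : b *: u2 = - (a *: u1) by apply/eqP; rewrite -addr_eq0 addrC H1.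
have eq1 : (b * g%:C + a * d) *: (D *m v1) = 0.
  have e1 : (g%:C *: D) *m v1 = s%:C *: u2 - P2 *m v2 by rewrite -E2 addrK.
  have e2 : (d *: D) *m v1 = P1 *m v1 - P2 *m v1 by rewrite -PD mulmxBl.
  rewrite scalerDl -!scalerA (scalemxAl g%:C) (scalemxAl d) e1 e2 E1 !scalerBr.
  rewrite (scalemxAr b) bv2 scalerA mulrC -scalerA bu2 mulmxN !scalerN -!scalemxAr !scalerA (mulrC s%:C a).
  by rewrite opprK addrC addrACA subrr addNr addr0.
have eq2 : (a * g%:C - b * conjc d) *: (ctr D *m u2) = 0.
  have e1 : (g%:C *: ctr D) *m u2 = s%:C *: v1 - ctr P1 *m u1.
    by rewrite -E3 ctrZ conjc_real addrAC subrr add0r.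
  have e2 : (conjc d *: ctr D) *m u2 = ctr P1 *m u2 - ctr P2 *m u2.
    by rewrite -ctrZ -PD ctrB mulmxBl.
  rewrite scalerBl -!scalerA (scalemxAl g%:C) (scalemxAl (conjc d)) e1 e2 !scalerBr.
  have av1 : a *: v1 = - (b *: v2) by apply/eqP; rewrite -addr_eq0 H2.
  have au1 : a *: u1 = - (b *: u2) by apply/eqP; rewrite -addr_eq0 H1.
  rewrite E4 (scalemxAr a) au1 mulmxN -scalemxAr !scalerA (mulrC a s%:C).
  rewrite -(scalerA s%:C a) av1 scalerN scalerA (mulrC s%:C b).
  by rewrite opprK opprB addrC addrACA subrr addNr addr0.
have c1 : b * g%:C + a * d = 0.
  move/eqP: eq1; rewrite scaler_eq0 => /orP[/eqP //|/eqP/(inj_unit Du) v1E].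
  by rewrite v1E eqxx in v10.
have c2 : a * g%:C - b * conjc d = 0.
  move/eqP: eq2; rewrite scaler_eq0 => /orP[/eqP //|/eqP/(inj_unit cDu) u2E].
  by rewrite u2E eqxx in u20.
have pos : 0 < g%:C ^+ 2 + d * conjc d.
  apply: (@lt_le_trans _ _ (g%:C ^+ 2)); first by rewrite exprn_gt0 // ltcR.
  by rewrite lerDl; exact: mulcJ_ge0.
have ea : a * (g%:C ^+ 2 + d * conjc d) = 0.
  by rewrite -[RHS](_ : g%:C * (a * g%:C - b * conjc d) + conjc d * (b * g%:C + a * d) = 0);
    [ring | rewrite c1 c2 !mulr0 addr0].
have a0 : a = 0.
  by move/eqP: ea; rewrite mulf_eq0 (gt_eqF pos) orbF => /eqP.
split => //; move: c1; rewrite a0 mul0r addr0 => /eqP; rewrite mulf_eq0 (negPf gC0) orbF.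
by move/eqP.
Qed.

Lemma rank2 p (x1 x2 : 'cV[C]_p) :
  (forall a b, a *: x1 + b *: x2 = 0 -> a = 0 /\ b = 0) -> \rank (row_mx x1 x2) = 2%N.
Proof.
move=> H; rewrite -mxrank_tr; apply/eqP; apply: inj_row_free => v Hv.
move: Hv; rewrite -[v]hsubmxK tr_row_mx mul_row_col.
rewrite [lsubmx v]mx11_scalar [rsubmx v]mx11_scalar !mul_scalar_mx => Hv.
have Hv' : (lsubmx v 0 0) *: x1 + (rsubmx v 0 0) *: x2 = 0.
  by apply: trmx_inj; rewrite linearD !linearZ /= Hv trmx0.
have [-> ->] := H _ _ Hv'.
by rewrite !raddf0 row_mx0.
Qed.

Lemma gram_tr p (x1 x2 y1 y2 : 'cV[C]_p) :
  ctr (row_mx x1 x2) *m row_mx x1 x2 = ctr (row_mx y1 y2) *m row_mx y1 y2 ->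
  forall a b, a *: x1 + b *: x2 = 0 -> a *: y1 + b *: y2 = 0.
Proof.
move=> G a b.
have lin : forall (z1 z2 : 'cV[C]_p), a *: z1 + b *: z2 = row_mx z1 z2 *m col_mx a%:M b%:M.
  by move=> z1 z2; rewrite mul_row_col !mul_mx_scalar.
rewrite !lin => Hx; apply: ctr_eq0.
rewrite ctrM mulmxA -(mulmxA _ (ctr _)) -G mulmxA -mulmxA -ctrM Hx mulmx0.
by [].
Qed.
End H.

Theorem lemma5 (R : realType) (n m : nat) (A : nat -> 'M[R[i]]_n)
  (mu1 mu2 : R[i]) (gs ss : R) (u1 u2 v1 v2 : 'cV[R[i]]_n) :
  (0 < n)%N ->
  \det (A m) != 0 ->
  mu1 != mu2 ->
  (* gamma_* >= 0 maximizes s_{2n-1}(F(gamma)) over gamma >= 0, max = s_* > 0 *)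
  0 <= gs ->
  is_sv (Fmat m A mu1 mu2 gs) (n + n).-2 ss ->
  (forall g s, 0 <= g -> is_sv (Fmat m A mu1 mu2 g) (n + n).-2 s -> s <= ss) ->
  0 < ss ->
  (* [u1;u2], [v1;v2] are a pair of (unit) left/right singular vectors for s_* *)
  Fmat m A mu1 mu2 gs *m col_mx v1 v2 = ss%:C *: col_mx u1 u2 ->
  ctr (Fmat m A mu1 mu2 gs) *m col_mx u1 u2 = ss%:C *: col_mx v1 v2 ->
  ctr (col_mx u1 u2) *m col_mx u1 u2 = 1%:M ->
  ctr (col_mx v1 v2) *m col_mx v1 v2 = 1%:M ->
  (* normalization conditions *)
  ctr u2 *m mpoly_dd m A mu1 mu2 *m v1 = 0 ->
  ctr u2 *m u1 = ctr v2 *m v1 ->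
  ctr (row_mx u1 u2) *m row_mx u1 u2 = ctr (row_mx v1 v2) *m row_mx v1 v2 ->
  (* hypotheses of the lemma *)
  0 < gs ->
  \det (mpoly_dd m A mu1 mu2) != 0 ->
  \rank (row_mx u1 u2) = 2%N /\ \rank (row_mx v1 v2) = 2%N.
Proof.
move=> _ _ mu12 _ _ _ _ HF HF' Hu _ _ _ HG g0 Dn.
have d0 : mu1 - mu2 != 0 by rewrite subr_eq0.
have PD : mpoly_eval m A mu1 - mpoly_eval m A mu2 = (mu1 - mu2) *: mpoly_dd m A mu1 mu2.
  by rewrite /mpoly_dd scalerA divff // scale1r.
move: HF; rewrite /Fmat mul_block_col scale_col_mx => /eq_col_mx [E1 E2].
rewrite mul0mx addr0 in E1.
move: HF'; rewrite /Fmat ctr_block ctr0 mul_block_col scale_col_mx => /eq_col_mx [E3 E4].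
rewrite mul0mx add0r in E4.
have HG' := HG.
rewrite !ctr_row !mul_col_row in HG'; case/eq_block_mx: HG' => G1 _ _ G2.
rewrite ctr_col mul_row_col in Hu.
have key := core d0 PD Dn g0 E1 E2 E3 E4 G1 G2 Hu.
split; apply: rank2 => a b H.
- exact: key H (gram_tr HG H).
- exact: key (gram_tr (esym HG) H) H.
Qed.
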